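(* For every integer $k\geq 0$, the formal power series $G_k(x)$ satisfies $$G_k(x)=\frac{1+x\sum_{j=0}^{k-1}C(k,j)\bigl(4^{j}+(-1)^{k}(-4)^{j}\bigr)G_j(x)}{1-2^{k}(2^{k+1}+1)x},$$ where $C(k,j)=\binom{k}{j}$ (for $k=0$ this reads $G_0(x)=1/(1-3x)$).
   Context: The Stern polynomials $B_n(t)\in\mathbb{Z}[t]$ are defined by $B_0(t)=0$, $B_1(t)=1$, and for $n\geq 1$: $B_{2n}(t)=tB_n(t)$, $B_{2n+1}(t)=B_n(t)+B_{n+1}(t)$. For $n\geq1$ let $e(n)=\deg B_n(t)$. For each $n\ge0$ the set $\{a\geq1:\;e(a)=n\}$ is finite (it has $3^n$ elements). For $k,n\geq 0$ let $S_k(n)=\sum_{a\geq 1:\;e(a)=n}a^{k}$ and define the formal power series $G_k(x)=\sum_{a=1}^{\infty}a^{k}x^{e(a)}=\sum_{n=0}^{\infty}S_k(n)x^n$. *)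

(* Defs.v *)
From HB Require Import structures.
From mathcomp Require Import all_boot all_order all_algebra.
From Stdlib Require Import ClassicalEpsilon.
Set Implicit Arguments. Unset Strict Implicit. Unset Printing Implicit Defensive.
Import Order.TTheory GRing.Theory Num.Theory.
Local Open Scope ring_scope.

(* Stern polynomials, computed with fuel (fuel n suffices for B_n). *)
Fixpoint Baux (f n : nat) : {poly int} :=
  match f with
  | 0 => 0
  | f'.+1 =>
    if n is 0 then 0 else
    if n == 1%N then 1 else
    if odd n then Baux f' n./2 + Baux f' (n./2).+1
    else 'X * Baux f' n./2
  end.

Definition B (n : nat) : {poly int} := Baux n n.

Definition e (n : nat) : nat := (size (B n)).-1.

(* S_k(n) = sum of a^k over the (finite) set {a >= 1 : e(a) = n}.
   The set is enumerated by a duplicate-free list chosen by classical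
   choice (the sum does not depend on the choice); if no such list
   existed the value would default to the sum over [::]. *)
Definition enumerates (n : nat) (s : seq nat) : Prop :=
  uniq s /\ forall a, (a \in s) <-> ((1 <= a)%N /\ e a = n).

Definition level_set (n : nat) : seq nat :=
  epsilon (inhabits [::]) (enumerates n).

Definition S (k n : nat) : nat := (\sum_(a <- level_set n) a ^ k)%N.

Definition fps := nat -> int.
Definition fps_one : fps := fun n => (n == 0%N)%:R.
Definition fps_X : fps := fun n => (n == 1%N)%:R.
Definition fps_add (f g : fps) : fps := fun n => f n + g n.
Definition fps_sub (f g : fps) : fps := fun n => f n - g n.
Definition fps_scale (c : int) (f : fps) : fps := fun n => c * f n.
Definition fps_mul (f g : fps) : fps :=
  fun n => \sum_(i < n.+1) f i * g (n - i)%N.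
Definition fps_sum (m : nat) (F : nat -> fps) : fps :=
  fun n => \sum_(j < m) F j n.

(* G_k(x) = sum_{a >= 1} a^k x^{e(a)} = sum_n S_k(n) x^n *)
Definition G (k : nat) : fps := fun n => (S k n)%:Z.

(* Main.v *)
Require Import Defs.
From HB Require Import structures.
From mathcomp Require Import all_boot all_order all_algebra.
From mathcomp Require Import zify.
Import Order.TTheory GRing.Theory Num.Theory.
Local Open Scope ring_scope.

From mathcomp Require Import ring.
Lemma Baux_fuel f g n : (n <= f)%N -> (n <= g)%N -> Baux f n = Baux g n.
Proof.
elim: f g n => [|f IH] [|g] n /=.
- by [].
- by case: n.
- by case: n.
case: n => [|n] // Hf Hg.
case: ifP => // /eqP H1.
have Hh := odd_double_half n.+1; rewrite -muln2 in Hh.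
case: ifP => Ho; rewrite Ho in Hh.
  by rewrite (IH g) ?(IH g (n.+1./2).+1) //; lia.
by rewrite (IH g) //; lia.
Qed.

Lemma Baux_S f n : Baux f.+1 n =
  if n is 0 then 0 else if n == 1%N then 1 else
  if odd n then Baux f n./2 + Baux f (n./2).+1 else 'X * Baux f n./2.
Proof. by []. Qed.

Lemma B_even n : (1 <= n)%N -> B (2 * n) = 'X * B n.
Proof.
move=> Hn; rewrite /B.
case E: (2 * n)%N => [|m]; first lia.
rewrite Baux_S.
have -> : (m.+1 == 1%N) = false by apply/eqP; lia.
have -> : odd m.+1 = false by rewrite -E oddM.
have -> : (m.+1)./2 = n by rewrite -E mul2n doubleK.
by rewrite (Baux_fuel m n) //; lia.
Qed.

Lemma B_odd n : (1 <= n)%N -> B (2 * n).+1 = B n + B n.+1.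
Proof.
move=> Hn; rewrite /B Baux_S.
have -> : ((2 * n).+1 == 1%N) = false by apply/eqP; lia.
have -> : odd (2 * n).+1 = true by rewrite /= oddM.
have -> : ((2 * n).+1)./2 = n by rewrite /= mul2n uphalf_double.
by rewrite (Baux_fuel (2*n) n n) ?(Baux_fuel (2*n) n.+1 n.+1) //; lia.
Qed.

Lemma B1 : B 1 = 1.
Proof. by []. Qed.

Lemma Baux_nonneg f n i : 0 <= (Baux f n)`_i.
Proof.
elim: f n i => [|f IH] n i /=; first by rewrite coef0.
case: n => [|n]; first by rewrite coef0.
case: ifP => _; first by rewrite coef1; case: (i == 0)%N.
case: ifP => _; first by rewrite coefD addr_ge0.
by rewrite coefXM; case: ifP.
Qed.

Lemma size_add_nn_l (p q : {poly int}) :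
  (forall i, 0 <= p`_i) -> (forall i, 0 <= q`_i) ->
  leq (size p) (size (p + q)).
Proof.
move=> Hp Hq.
case E: (size p) => [|s] //.
have Hl : p`_s != 0.
  have : lead_coef p != 0 by rewrite lead_coef_eq0 -size_poly_eq0 E.
  by rewrite lead_coefE E.
have Hpos : 0 < (p + q)`_s.
  rewrite coefD; have := Hq s; have := Hp s; rewrite le0r (negbTE Hl) /=.
  by move=> H1 H2; apply: (lt_le_trans H1); rewrite lerDl.
rewrite ltnNge; apply/negP => Hs.
by move: Hpos; rewrite nth_default // ltxx.
Qed.

Lemma size_add_nn (p q : {poly int}) :
  (forall i, 0 <= p`_i) -> (forall i, 0 <= q`_i) ->
  size (p + q) = maxn (size p) (size q).
Proof.
move=> Hp Hq; apply/eqP; rewrite eqn_leq size_polyD /= geq_max.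
by rewrite size_add_nn_l // addrC size_add_nn_l.
Qed.

Definition sz n := size (B n).

Lemma sz_even n : (1 <= n)%N -> (1 <= sz n)%N -> sz (2 * n) = (sz n).+1.
Proof.
move=> Hn Hs; rewrite /sz B_even // mulrC size_mulX //.
by rewrite -size_poly_eq0 -/(sz n); lia.
Qed.

Lemma sz_odd n : (1 <= n)%N -> sz (2 * n).+1 = maxn (sz n) (sz n.+1).
Proof. by move=> Hn; rewrite /sz B_odd // size_add_nn // => i; apply: Baux_nonneg. Qed.

Lemma sz1 : sz 1 = 1%N.
Proof. by rewrite /sz B1 size_poly1. Qed.
Lemma sz_props m : (1 <= m)%N ->
  [/\ (1 <= sz m)%N, (1 <= sz m.+1)%N, (sz m.+1 <= (sz m).+1)%N & (sz m <= (sz m.+1).+1)%N].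
Proof.
elim/ltn_ind: m => m IH Hm.
case: (ltngtP m 1) => [|Hm2|->]; first lia; last first.
  have E2 : sz 2 = 2%N by have := sz_even 1 (leqnn 1); rewrite sz1 => ->.
  by rewrite E2 sz1.
have Hh := odd_double_half m; rewrite -muln2 in Hh.
set b := m./2 in Hh.
have Hb : (1 <= b)%N by case: (odd m) Hh; lia.
have [h1 h2 h3 h4] := IH b ltac:(case: (odd m) Hh; lia) Hb.
case Ho: (odd m) Hh => /= Hh.
- have -> : m = (2 * b).+1 by lia.
  have -> : (2 * b).+2 = (2 * b.+1)%N by lia.
  rewrite sz_odd // sz_even //; split; lia.
- have -> : m = (2 * b)%N by lia.
  rewrite sz_even // sz_odd //; split; lia.
Qed.

Arguments sz_props {m}.

Lemma sz_pos m : (1 <= m)%N -> (1 <= sz m)%N.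
Proof. by case/sz_props. Qed.

Arguments sz_pos {m}.

Lemma sz_2b b : (1 <= b)%N -> sz (2 * b) = (sz b).+1.
Proof. by move=> Hb; rewrite sz_even // sz_pos. Qed.

Lemma sz_4b1 b : (1 <= b)%N -> sz (4 * b).+1 = (sz b).+1.
Proof.
move=> Hb; have -> : (4 * b)%N = (2 * (2 * b))%N by lia.
have [h1 h2 h3 h4] := sz_props Hb.
rewrite sz_odd; last lia.
rewrite sz_2b // sz_odd //; lia.
Qed.

Lemma sz_4cm1 c : (1 <= c)%N -> sz (4 * c).-1 = (sz c).+1.
Proof.
move=> Hc; have -> : (4 * c).-1 = (2 * (2 * c).-1).+1 by lia.
rewrite sz_odd; last lia.
have -> : (2 * c).-1.+1 = (2 * c)%N by lia.
rewrite sz_2b //.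
case: (ltngtP c 1) => [|Hc2|->]; first lia; last first.
  have -> : (2 * 1).-1 = 1%N by []. rewrite sz1; lia.
have -> : (2 * c).-1 = (2 * c.-1).+1 by lia.
have [h1 h2 h3 h4] := sz_props (m := c.-1) ltac:(lia).
rewrite sz_odd; last lia.
have E : c.-1.+1 = c by lia.
rewrite E in h1 h2 h3 h4 *.
lia.
Qed.

Lemma decomp a : (2 <= a)%N ->
  (exists2 b, (1 <= b)%N & a = (2 * b)%N) \/
  (exists2 b, (1 <= b)%N & a = (4 * b)%N.+1) \/
  (exists2 b, (1 <= b)%N & a = (4 * b)%N.-1).
Proof.
move=> Ha.
case: (ltngtP (a %% 4) 0) => [|H0|H0]; first lia.
- case: (ltngtP (a %% 4) 1) => [H1|H1|H1].
  + left; exists (a %/ 2)%N; lia.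
  + case: (ltngtP (a %% 4) 2) => [H2|H2|H2]; first lia.
    * right; right; exists (a %/ 4)%N.+1; lia.
    * left; exists (a %/ 2)%N; lia.
  + right; left; exists (a %/ 4)%N; lia.
- left; exists (a %/ 2)%N; lia.
Qed.

Lemma sz_ge2 a : (2 <= a)%N -> (2 <= sz a)%N.
Proof.
move=> /decomp [[b Hb ->]|[[b Hb ->]|[b Hb ->]]];
  rewrite ?sz_2b ?sz_4b1 ?sz_4cm1 //; have := sz_pos Hb; lia.
Qed.

Arguments sz_ge2 {a}.

Fixpoint L n : seq nat :=
  if n is n'.+1 then
    [seq (2 * b)%N | b <- L n'] ++ [seq (4 * b).-1 | b <- L n'] ++ [seq (4 * b).+1 | b <- L n']
  else [:: 1%N].

Lemma memL n a : (a \in L n) = (1 <= a)%N && (sz a == n.+1).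
Proof.
elim: n a => [|n IH] a /=.
  rewrite inE; apply/eqP/andP => [->|[H1 /eqP H2]]; first by rewrite sz1.
  case: (ltngtP a 1) => // Ha; first lia.
  have := sz_ge2 Ha; lia.
rewrite !mem_cat; apply/idP/idP.
- case/or3P => /mapP [b]; rewrite IH => /andP [Hb /eqP Hs] ->.
  + by rewrite sz_2b // Hs eqxx andbT; lia.
  + by rewrite sz_4cm1 // Hs eqxx andbT; lia.
  + by rewrite sz_4b1 // Hs eqxx andbT; lia.
- case/andP => Ha /eqP Hs.
  have Ha2 : (2 <= a)%N.
    case: (ltngtP a 1) => // H; first lia. by move: Hs; rewrite H sz1.
  case: (decomp _ Ha2) => [[b Hb E]|[[b Hb E]|[b Hb E]]]; subst a.
  + apply/orP; left; apply/mapP; exists b => //; rewrite IH Hb /=.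
    by move: Hs; rewrite sz_2b // => -[->].
  + apply/orP; right; apply/orP; right; apply/mapP; exists b => //; rewrite IH Hb /=.
    by move: Hs; rewrite sz_4b1 // => -[->].
  + apply/orP; right; apply/orP; left; apply/mapP; exists b => //; rewrite IH Hb /=.
    by move: Hs; rewrite sz_4cm1 // => -[->].
Qed.

Lemma uniqL n : uniq (L n).
Proof.
elim: n => [|n IH] //=.
have Hpos : forall b, b \in L n -> (1 <= b)%N by move=> b; rewrite memL => /andP [].
rewrite !cat_uniq.
apply/and5P; split.
- by rewrite map_inj_uniq // => x y; lia.
- apply/hasPn => x; rewrite mem_cat => /orP [] /mapP [b Hb ->];
  apply/negP => /mapP [c Hc E]; have := Hpos _ Hb; have := Hpos _ Hc; lia.
- rewrite map_inj_in_uniq // => x y Hx Hy; have := Hpos _ Hx; have := Hpos _ Hy; lia.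
- apply/hasPn => x /mapP [b Hb ->].
  apply/negP => /mapP [c Hc E]; have := Hpos _ Hb; have := Hpos _ Hc; lia.
- by rewrite map_inj_uniq // => x y; lia.
Qed.
Lemma mn_int (y : int) n : y *+ n = y * n%:Z.
Proof. by rewrite -natz mulr_natr. Qed.

Lemma key_id (x : int) (k : nat) :
  (2 * x) ^+ k + (4 * x - 1) ^+ k + (4 * x + 1) ^+ k =
  (2 ^+ k * (2 ^+ k.+1 + 1)) * x ^+ k +
  \sum_(j < k) (('C(k, j))%:Z * (4 ^+ j + (-1) ^+ k * (-4) ^+ j)) * x ^+ j.
Proof.
have E1 := exprD1n (4 * x) k.
have E2 : (4 * x - 1) ^+ k = (-1) ^+ k * \sum_(i < k.+1) ((-4) * x) ^+ i *+ 'C(k, i).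
  rewrite -exprD1n -exprMn. congr (_ ^+ _). ring.
rewrite E1 E2 !big_ord_recr /= binn mulrDr.
have -> : \sum_(j < k) (('C(k, j))%:Z * (4 ^+ j + (-1) ^+ k * (-4) ^+ j)) * x ^+ j =
   (-1) ^+ k * \sum_(i < k) ((-4) * x) ^+ i *+ 'C(k, i) + \sum_(i < k) (4 * x) ^+ i *+ 'C(k, i).
  rewrite mulr_sumr -big_split /=; apply: eq_bigr => i _.
  rewrite !mn_int [(-4 * x) ^+ i]exprMn [(4 * x) ^+ i]exprMn; ring.
have H4 : (4 : int) ^+ k = 2 ^+ k * 2 ^+ k by rewrite -exprMn.
have Hm : (-1 : int) ^+ k * (-4) ^+ k = 4 ^+ k.
  by rewrite -exprMn; congr (_ ^+ _).
rewrite !mulr1n !exprMn mulrA Hm H4 exprS. ring.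
Qed.
From Stdlib Require Import ClassicalEpsilon FunctionalExtensionality.

Lemma level_perm n : perm_eq (level_set n) (L n).
Proof.
have Hen : enumerates n (L n).
  split; first exact: uniqL.
  move=> a; rewrite memL /e -/(sz a); split.
    by case/andP => -> /eqP ->.
  case=> H1 H2; rewrite H1 /=; have := sz_pos H1; lia.
have [Hu Hm] : enumerates n (level_set n).
  by apply: epsilon_spec; exists (L n).
have [_ Hm'] := Hen.
apply: uniq_perm => //; first exact: uniqL.
move=> a; apply/idP/idP => H.
  by apply/(Hm' a)/(Hm a).
by apply/(Hm a)/(Hm' a).
Qed.

Lemma S_int k n : (S k n)%:Z = \sum_(a <- L n) (a%:Z) ^+ k.
Proof.
rewrite /S (perm_big _ (level_perm n)) /=.
rewrite -natz natr_sum; apply: eq_bigr => a _; by rewrite natrX natz.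
Qed.

Lemma S0 k : S k 0 = 1%N.
Proof.
apply/eqP; rewrite -(eqr_nat int) !natz S_int /= big_cons big_nil.
by rewrite expr1n addr0.
Qed.

Lemma S_rec k n : (S k n.+1)%:Z =
  (2 ^+ k * (2 ^+ k.+1 + 1)) * (S k n)%:Z +
  \sum_(j < k) (('C(k, j))%:Z * (4 ^+ j + (-1) ^+ k * (-4) ^+ j)) * (S j n)%:Z.
Proof.
rewrite !S_int /= !big_cat !big_map /=.
under [X in _ = _ + X]eq_bigr => j _ do rewrite S_int big_distrr /=.
rewrite exchange_big /= big_distrr -big_split /= -!big_split /=.
apply: eq_big_seq => b Hb.
have Hb1 : (1 <= b)%N by move: Hb; rewrite memL => /andP [].
have -> : ((4 * b).-1 : int) = 4 * b%:Z - 1.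
  have e : ((4 * b).-1 + 1 = 4 * b)%N by lia.
  by apply: (addIr 1); rewrite subrK -[1 in LHS]/(Posz 1) -PoszD e PoszM.
have -> : ((4 * b).+1 : int) = 4 * b%:Z + 1 by rewrite -[(4 * b).+1]addn1 PoszD PoszM.
have -> : ((2 * b)%N : int) = 2 * b%:Z by rewrite PoszM.
by rewrite addrA key_id.
Qed.

Theorem mainTheorem8 (k : nat) :
  fps_mul (fps_sub fps_one
             (fps_scale ((2 ^+ k * (2 ^+ k.+1 + 1)) : int) fps_X))
          (G k)
  = fps_add fps_one
      (fps_mul fps_X
         (fps_sum k (fun j =>
            fps_scale (('C(k, j))%:Z * (4 ^+ j + (-1) ^+ k * (-4) ^+ j))
                      (G j)))).
Proof.
apply: functional_extensionality => m.
rewrite /fps_mul /fps_add /fps_sub /fps_one /fps_scale /fps_X /fps_sum /G.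
case: m => [|m].
  by rewrite !big_ord1 /= S0 mulr0 subr0 mulr1 mul0r addr0.
rewrite big_ord_recl big_ord_recl /= [in RHS]big_ord_recl [in RHS]big_ord_recl /=.
rewrite !mulr0 !subr0 !mul0r !sub0r !big1_eq !addr0 !add0r !mulr1 !mul1r.
rewrite subn0 /bump /= subn1 /= S_rec [X in _ = _ + X]big1 ?addr0; first ring.
by move=> i _; rewrite mul0r.
Qed.
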